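(* Let $0 < c \le 1$ be a constant, let $n$ be a positive integer, let $\log n/\sqrt{n} \ll p = p(n) \le 1$ and let $D = (V,E) \in \mathcal{D}(n,p)$. Let $\ell = \ell(n) \le n$ be an integer satisfying $\ell p^2 \gg \log n$. Then a.a.s. (i) for every $A \subseteq V$ of size $a$ with $c\ell p \le a \le 2\ell p$ we have $|\{u \in V\setminus A : \deg^+_D(u,A) \ge 2pa\}| \le \ell p$; (ii) for every $A \subseteq V$ of size $a$ with $\ell p^{3/2} \le a \le 2\ell p$ we have $|\{u \in V \setminus A : \deg^+_D(u,A) \ge 7\sqrt{p}\,a\}| \le \ell p^{3/2}$.
   Context: $\mathcal{D}(n,p)$ is the random digraph on $[n]$ where each ordered pair $(u,v)$, $u\ne v$, is an arc independently with probability $p$. $\deg^+_D(u,A)$ is the number of $a \in A$ with $(u,a)$ an arc of $D$. a.a.s. means with probability tending to $1$ as $n\to\infty$; $f \ll g$ means $f/g\to 0$; $\log$ is natural. *)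

(* Defs.v *)
From HB Require Import structures.
From mathcomp Require Import all_boot all_order all_algebra.
From mathcomp Require Import all_classical all_reals all_analysis.
Set Implicit Arguments. Unset Strict Implicit. Unset Printing Implicit Defensive.
Import Order.TTheory GRing.Theory Num.Theory.
Local Open Scope ring_scope.

Definition digraph (n : nat) := {set ('I_n * 'I_n)}.

Definition loopless (n : nat) (D : digraph n) : bool :=
  [forall x in D, x.1 != x.2].

(* Probability of the digraph D in D(n,p): each arc (u,v), u<>v,
   present independently with probability p. *)
Definition dnp_weight (R : realType) (n : nat) (p : R) (D : digraph n) : R :=
  \prod_(x : 'I_n * 'I_n | x.1 != x.2) (if x \in D then p else 1 - p).

Definition dnp_prob (R : realType) (n : nat) (p : R) (E : pred (digraph n)) : R :=
  \sum_(D : digraph n | loopless D && E D) dnp_weight p D.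

Definition outdeg (n : nat) (D : digraph n) (u : 'I_n) (A : {set 'I_n}) : nat :=
  #|[set a in A | (u, a) \in D]|.

Definition prop_i (R : realType) (n : nat) (c p l : R) (D : digraph n) : Prop :=
  forall A : {set 'I_n},
    c * l * p <= (#|A|%:R : R) <= 2 * l * p ->
    (#|[set u in ~: A | 2 * p * #|A|%:R <= ((outdeg D u A)%:R : R)]|%:R : R)
      <= l * p.

(* Property (ii): p^{3/2} is written p * sqrt p. *)
Definition prop_ii (R : realType) (n : nat) (p l : R) (D : digraph n) : Prop :=
  forall A : {set 'I_n},
    l * (p * Num.sqrt p) <= (#|A|%:R : R) <= 2 * l * p ->
    (#|[set u in ~: A | 7 * Num.sqrt p * #|A|%:R <= ((outdeg D u A)%:R : R)]|%:R : R)
      <= l * (p * Num.sqrt p).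

(* Main.v *)
Require Import Defs.
From HB Require Import structures.
From mathcomp Require Import all_boot all_order all_algebra.
From mathcomp Require Import all_classical all_reals all_analysis.
Import Order.TTheory GRing.Theory Num.Theory.
Import numFieldNormedType.Exports.
Local Open Scope ring_scope.
Set Implicit Arguments. Unset Strict Implicit.
From mathcomp Require Import ring lra zify.
Lemma sum_set_prod (R : realType) (T : finType) (F : T -> bool -> R) :
  \sum_(D : {set T}) \prod_(x : T) F x (x \in D) =
  \prod_(x : T) (F x true + F x false).
Proof.
under eq_bigr do rewrite -big_bool.
rewrite bigA_distr_bigA /=.
rewrite (reindex (fun f : {ffun T -> bool} => [set x | f x])) /=.
  by apply: eq_bigr => f _; apply: eq_bigr => x _; rewrite inE.
exists (fun D : {set T} => [ffun x => x \in D]) => [f _|D _].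
  by apply/ffunP => x; rewrite ffunE inE.
by apply/setP => x; rewrite inE ffunE.
Qed.

Lemma expect_prod (R : realType) (n : nat) (p : R) (g : 'I_n * 'I_n -> R) :
  \sum_(D : digraph n | loopless D)
     dnp_weight p D * \prod_(x : 'I_n * 'I_n) (if x \in D then g x else 1)
  = \prod_(x : 'I_n * 'I_n | x.1 != x.2) (p * g x + (1 - p)).
Proof.
pose F (x : 'I_n * 'I_n) (b : bool) : R :=
  if x.1 == x.2 then (if b then 0 else 1) else (if b then p * g x else 1 - p).
transitivity (\sum_(D : digraph n) \prod_(x : 'I_n * 'I_n) F x (x \in D)).
  rewrite big_mkcond /=; apply: eq_bigr => D _.
  rewrite [RHS](bigID (fun x : 'I_n * 'I_n => x.1 == x.2)) /=.
  case: (boolP (loopless D)) => hl.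
    rewrite [X in _ = X * _]big1; last first.
      move=> x xl; rewrite /F xl; case: ifP => // xD.
      by move/forallP: hl => /(_ x); rewrite xD /= xl.
    rewrite mul1r [X in _ * X](bigID (fun x : 'I_n * 'I_n => x.1 == x.2)) /=.
    rewrite [X in _ * (X * _)]big1; last first.
      move=> x xl; case: ifP => // xD.
      by move/forallP: hl => /(_ x); rewrite xD /= xl.
    rewrite mul1r /dnp_weight -big_split /=; apply: eq_bigr => x xl.
    rewrite /F (negbTE xl); by case: (x \in D); rewrite ?mulr1.
  move/forallPn: hl => [x]; rewrite negb_imply negbK => /andP[xD xl].
  by rewrite (bigD1 x) //= /F xl xD !mul0r.
rewrite sum_set_prod (bigID (fun x : 'I_n * 'I_n => x.1 == x.2)) /=.
rewrite big1 ?mul1r; last by move=> x xl; rewrite /F xl add0r.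
by apply: eq_bigr => x xl; rewrite /F (negbTE xl).
Qed.

Lemma weight_ge0 (R : realType) (n : nat) (p : R) (D : digraph n) :
  0 <= p <= 1 -> 0 <= dnp_weight p D.
Proof.
move=> /andP[p0 p1]; apply: prodr_ge0 => x _.
by case: ifP => _ //; rewrite subr_ge0.
Qed.

Lemma total_mass (R : realType) (n : nat) (p : R) :
  \sum_(D : digraph n | loopless D) dnp_weight p D = 1.
Proof.
transitivity (\sum_(D : digraph n | loopless D) dnp_weight p D *
   \prod_(x : 'I_n * 'I_n) (if x \in D then (fun _ => 1 : R) x else 1)).
  by apply: eq_bigr => D _; rewrite big1 ?mulr1 // => x _; case: ifP.
rewrite expect_prod; apply: big1 => x _; rewrite mulr1 addrC subrK //.
Qed.

Lemma prod_outdeg (R : realType) (n : nat) (E : R) (A B : {set 'I_n}) (D : digraph n) :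
  \prod_(x : 'I_n * 'I_n)
     (if x \in D then (if (x.1 \in B) && (x.2 \in A) then E else 1) else 1)
  = \prod_(u in B) E ^+ outdeg D u A.
Proof.
transitivity (\prod_(u : 'I_n) \prod_(a : 'I_n)
   (if (u \in B) && (a \in A) && ((u, a) \in D) then E else 1)).
  rewrite pair_bigA /=; apply: eq_bigr => [[u a]] _ /=.
  by case: ((u, a) \in D); case: (u \in B); case: (a \in A).
rewrite [RHS]big_mkcond /=; apply: eq_bigr => u _.
case: (boolP (u \in B)) => uB /=; last by rewrite big1.
 idtac.
rewrite /outdeg -prodr_const [RHS]big_mkcond /=; apply: eq_bigr => a _.
by rewrite inE.
Qed.

Lemma markov (R : realType) (n : nat) (p : R) (A B : {set 'I_n}) (t : R) :
  0 <= p <= 1 ->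
  \sum_(D : digraph n | loopless D && [forall u in B, t <= (outdeg D u A)%:R])
     dnp_weight p D
  <= expR (- (#|B|%:R * (t / 4))) * (1 - p + p * expR (1/4)) ^+ (#|B| * #|A|).
Proof.
move=> hp; have /andP[p0 p1] := hp.
set E := expR (1/4).
set K := expR (- (#|B|%:R * (t / 4))).
pose g (x : 'I_n * 'I_n) := if (x.1 \in B) && (x.2 \in A) then E else 1.
have E1 : 1 <= E by rewrite /E -expR0 ler_expR.
rewrite big_mkcondr /=.
apply: (@le_trans _ _ (\sum_(D : digraph n | loopless D)
    dnp_weight p D * (K * \prod_(x : 'I_n * 'I_n) (if x \in D then g x else 1)))).
  apply: ler_sum => D _; case: ifP => bad; last first.
    apply: mulr_ge0; first exact: weight_ge0.
    by apply: mulr_ge0; [exact: expR_ge0 | apply: prodr_ge0 => x _; case: ifP => //; rewrite /g; case: ifP => // _ _; apply: le_trans E1].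
  rewrite -[X in X <= _]mulr1; apply: ler_wpM2l; first exact: weight_ge0.
  rewrite /g prod_outdeg.
  apply: (@le_trans _ _ (K * \prod_(u in B) expR (t / 4))).
    rewrite prodr_const -expRM_natl /K -expRD addNr expR0 //.
  apply: ler_wpM2l; first exact: expR_ge0.
  apply: ler_prod => u uB; rewrite expR_ge0 /= /E -expRM_natl ler_expR.
  move/forallP: bad => /(_ u); rewrite uB /= => htu.
  by rewrite mul1r ler_wpM2r.

under eq_bigr do rewrite mulrCA.
rewrite -mulr_sumr expect_prod; apply: ler_wpM2l; first exact: expR_ge0.
pose psi (x : 'I_n * 'I_n) := if (x.1 \in B) && (x.2 \in A) then 1 - p + p * E else 1.
have psi1 : forall x, 1 <= psi x.
  move=> x; rewrite /psi; case: ifP => // _.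
  by rewrite -addrA lerDl addrC -[X in _ - X]mulr1 -mulrBr mulr_ge0 // subr_ge0.
apply: (@le_trans _ _ (\prod_(x : 'I_n * 'I_n | x.1 != x.2) psi x)).
  apply: ler_prod => x _; rewrite /g /psi; case: ifP => _.
    by rewrite addrC lexx andbT addr_ge0 ?subr_ge0 // mulr_ge0 // (le_trans _ E1).
  by rewrite mulr1 addrC subrK lexx ler01.
rewrite [X in _ <= X](_ : _ = \prod_(x : 'I_n * 'I_n) psi x); last first.
  rewrite -cardsX -prodr_const [LHS]big_mkcond /=; apply: eq_bigr => [[u a]] _.
  by rewrite finset.in_setX /psi.
rewrite [X in _ <= X](bigID (fun x : 'I_n * 'I_n => x.1 == x.2)) /=.
rewrite -[X in X <= _]mul1r; apply: ler_wpM2r.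
  by apply: prodr_ge0 => x _; apply: le_trans (psi1 x).
rewrite -[X in X <= _](@big1 R 1 *%R _ (index_enum _) (fun x : 'I_n * 'I_n => x.1 == x.2) (fun _ => 1)) //.
by apply: ler_prod => x _; rewrite ler01 psi1.
Qed.

Definition Gev (R : realType) (n : nat) (s al be : R) (D : digraph n) : bool :=
  [exists A : {set 'I_n}, (al <= (#|A|%:R : R)) &&
     (be < (#|[set u in ~: A | s * #|A|%:R <= ((outdeg D u A)%:R : R)]|%:R : R))].

Lemma union_bound (R : realType) (n : nat) (p s al be : R) :
  0 <= p <= 1 ->
  dnp_prob p (@Gev R n s al be) <=
  \sum_(A : {set 'I_n} | al <= (#|A|%:R : R))
   \sum_(B : {set 'I_n} | be < (#|B|%:R : R))
    \sum_(D : digraph n | loopless D &&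
                   [forall u in B, s * #|A|%:R <= ((outdeg D u A)%:R : R)])
       dnp_weight p D.
Proof.
move=> hp; rewrite /dnp_prob big_mkcondr /=.
under [X in _ <= X]eq_bigr do under eq_bigr do rewrite big_mkcondr.
under [X in _ <= X]eq_bigr do rewrite exchange_big.
rewrite [X in _ <= X]exchange_big /=; apply: ler_sum => D _.
have w0 := weight_ge0 D hp.
have f0 : forall (A B : {set 'I_n}),
   0 <= (if [forall u in B, s * #|A|%:R <= ((outdeg D u A)%:R : R)]
         then dnp_weight p D else 0).
  by move=> A B; case: ifP.
case: ifP => hG; last first.
  by apply: sumr_ge0 => A _; apply: sumr_ge0 => B _.
case/existsP: hG => A /andP[hA hS].
set S := [set u in ~: A | _] in hS.
rewrite (bigD1 A) //= (bigD1 S) //=.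
have -> : [forall u in S, s * #|A|%:R <= ((outdeg D u A)%:R : R)].
  by apply/forallP => u; apply/implyP; rewrite inE => /andP[].
rewrite -addrA lerDl addr_ge0 //.
  by apply: sumr_ge0 => B _.
by apply: sumr_ge0 => A' _; apply: sumr_ge0 => B _.
Qed.

Lemma arith_ab (R : realType) (k a b al be L : R) : 0 < k -> al <= a -> be <= b ->
  0 <= a -> 0<= b -> 6 * L <= k * al -> 6 * L <= k * be ->
  3 * (a + b) * L <= k * (a * b).
Proof. move=> k0 ha hb a0 b0 h1 h2.
have ka : 6 * L <= k * a by apply: (le_trans h1); rewrite ler_wpM2l // ltW.
have kb : 6 * L <= k * b by apply: (le_trans h2); rewrite ler_wpM2l // ltW.
have e1 : 6 * L * b <= k * a * b by rewrite ler_wpM2r.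
have e2 : 6 * L * a <= k * b * a by rewrite ler_wpM2r.
nra. Qed.

Lemma E_le (R : realType) : expR (1/4 : R) <= 4/3.
Proof.
have h1 := expRxMexpNx_1 (1/4 : R).
have h2 : 3/4 <= expR (- (1/4 : R)).
  apply: le_trans (expR_ge1Dx _); lra.
have h3 := expR_ge0 (1/4 : R).
nra.
Qed.

Lemma sum_pow (R : realType) (n : nat) (z : R) :
  \sum_(A : {set 'I_n}) z ^+ #|A| = (z + 1) ^+ n.
Proof.
transitivity (\sum_(A : {set 'I_n}) \prod_(x : 'I_n) (if x \in A then z else 1)).
  by apply: eq_bigr => A _; rewrite -prodr_const big_mkcond.
have := sum_set_prod (fun (x : 'I_n) (b : bool) => if b then z else 1).
rewrite /= => ->.
by rewrite prodr_const card_ord.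
Qed.

Lemma sum_pow_le (R : realType) (n : nat) :
  (0 < n)%N -> \sum_(A : {set 'I_n}) (n%:R^-1 : R) ^+ #|A| <= expR 1.
Proof.
move=> n0; rewrite sum_pow.
apply: (@le_trans _ _ (expR (n%:R^-1) ^+ n)).
  rewrite lerXn2r ?nnegrE ?addr_ge0 ?invr_ge0 ?ler0n ?expR_ge0 //.
  by rewrite addrC expR_ge1Dx.
by rewrite -expRM_natl mulfV // pnatr_eq0 -lt0n.
Qed.

Lemma ar2 (R : realType) (s p k a b L : R) : 3*(a+b)*L <= k*(a*b) ->
  k*(a*b) <= (s/4 - p/3)*(a*b) -> -(b*(s*a/4)) + b*a*(p/3) <= -((3*a+3*b)*L).
Proof. move=> h1 h2. have h := le_trans h1 h2.
have e : (s/4 - p/3)*(a*b) = b*(s*a/4) - b*a*(p/3) by ring.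
rewrite e in h. lra. Qed.

Lemma nat_aux (a b : nat) : (0 < a)%N -> (0 < b)%N -> (2 + (a + b) <= 3 * a + 3 * b)%N.
Proof. lia. Qed.

Lemma G_bound (R : realType) (n : nat) (p s al be k : R) :
  0 < p <= 1 -> (2 < n)%N -> 0 < k -> k <= s / 4 - p / 3 ->
  6 * ln (n%:R : R) <= k * al -> 6 * ln (n%:R : R) <= k * be ->
  dnp_prob p (@Gev R n s al be) <= (n%:R^-1) ^+ 2 * expR 1 ^+ 2.
Proof.
move=> /andP[p0 p1] n2 k0 hk ha hb.
have hp : 0 <= p <= 1 by rewrite ltW.
set L := ln (n%:R : R).
have L0 : 0 < L by apply: ln_gt0; rewrite ltr1n (ltn_trans _ n2).
set z := (n%:R^-1 : R).
have z0 : 0 <= z by rewrite invr_ge0 ler0n.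
have z1 : z <= 1 by rewrite invf_le1 ?ltr0n ?ler1n ?(ltn_trans _ n2) // ltnW.
have zL : expR (- L) = z by rewrite expRN lnK // posrE ltr0n (ltn_trans _ n2).
have al0 : 0 < al.
  rewrite -(pmulr_rgt0 _ k0); apply: lt_le_trans ha; rewrite mulr_gt0 //.
have be0 : 0 < be.
  rewrite -(pmulr_rgt0 _ k0); apply: lt_le_trans hb; rewrite mulr_gt0 //.
apply: le_trans (union_bound n s al be hp) _.
apply: (@le_trans _ _ (\sum_(A : {set 'I_n}) \sum_(B : {set 'I_n})
          z ^+ 2 * (z ^+ #|A| * z ^+ #|B|))).
  rewrite [X in X <= _]big_mkcond /=; apply: ler_sum => A _.
  case: ifP => hA; last by apply: sumr_ge0 => B _; rewrite !mulr_ge0 ?exprn_ge0.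
  rewrite [X in X <= _]big_mkcond /=; apply: ler_sum => B _.
  case: ifP => hB; last by rewrite !mulr_ge0 ?exprn_ge0.
  apply: le_trans (markov A B _ hp) _.
  set a := #|A|; set b := #|B|.
  have a1 : (0 < a)%N by rewrite -(ltr0n R); apply: lt_le_trans hA.
  have b1 : (0 < b)%N by rewrite -(ltr0n R); apply: lt_trans hB.
  apply: (@le_trans _ _ (expR (- (b%:R * (s * a%:R / 4))) * expR (p/3) ^+ (b * a))).
    apply: ler_wpM2l; first exact: expR_ge0.
    have E0 := expR_ge0 (1/4 : R).
    rewrite lerXn2r ?nnegrE ?expR_ge0 //; last first.
      apply: le_trans (expR_ge1Dx _).
      have := ler_wpM2l (ltW p0) (E_le R); lra.
    by rewrite addr_ge0 ?subr_ge0 ?mulr_ge0 // ltW.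
  rewrite -expRM_natl -expRD.
  apply: (@le_trans _ _ (expR (- ((3 * a + 3 * b)%N%:R * L)))).
    rewrite ler_expR.
    have h1 := arith_ab k0 hA (ltW hB) (ler0n _ a) (ler0n _ b) ha hb.
    have h2 : k * (a%:R * b%:R) <= (s / 4 - p / 3) * (a%:R * b%:R).
      by rewrite ler_wpM2r // mulr_ge0.
    have h := le_trans h1 h2.
    have e : (s / 4 - p / 3) * (a%:R * b%:R) = b%:R * (s * a%:R / 4) - b%:R * a%:R * (p / 3) by ring.
    rewrite e in h; rewrite natrM natrD !natrM.
    rewrite /L /a /b; lra.
  rewrite -mulrN expRM_natl zL -!exprD.
  apply: (ler_wiXn2l z0 z1); exact: nat_aux.
under eq_bigr do rewrite -mulr_sumr.
rewrite -mulr_sumr; apply: ler_wpM2l; first exact: exprn_ge0.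
under eq_bigr do rewrite -mulr_sumr.
rewrite -mulr_suml expr2.
have n0 : (0 < n)%N by rewrite (ltn_trans _ n2).
apply: ler_pM; try apply: sumr_ge0 => *; try apply: exprn_ge0 => //;
  exact: sum_pow_le.
Qed.

Lemma prob_le1 (R : realType) (n : nat) (p : R) (E : pred (digraph n)) :
  0 <= p <= 1 -> dnp_prob p E <= 1.
Proof.
move=> hp; rewrite /dnp_prob -(total_mass n p) big_mkcondr /=.
by apply: ler_sum => D _; case: ifP => // _; exact: weight_ge0.
Qed.

Lemma prob_compl (R : realType) (n : nat) (p : R) (E G1 G2 : pred (digraph n)) :
  0 <= p <= 1 -> (forall D, ~~ E D -> G1 D || G2 D) ->
  1 - dnp_prob p G1 - dnp_prob p G2 <= dnp_prob p E.
Proof.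
move=> hp hE; rewrite -(total_mass n p) (bigID E) /=.
set X := \sum_(i | _ && E i) _.
set Y := \sum_(i | _ && ~~ E i) _.
have -> : dnp_prob p E = X by [].
suff hY : Y <= dnp_prob p G1 + dnp_prob p G2 by lra.
rewrite /Y /dnp_prob !big_mkcondr -big_split /=; apply: ler_sum => D _.
have w0 := weight_ge0 D hp.
case: (boolP (E D)) => hD /=; first by rewrite addr_ge0 //; case: ifP.
case: (boolP (G1 D)) => g1; first by rewrite lerDl; case: ifP.
have g2 : G2 D by move: (hE D hD); rewrite (negbTE g1).
by rewrite g2 add0r.
Qed.

Lemma arith_i (R : realType) (c p l L : R) : 0 < c -> c <= 1 -> 0 <= L -> 0 < p ->
  36 / c * L <= l * p ^+ 2 ->
  6 * L <= p / 6 * (c * l * p) /\ 6 * L <= p / 6 * (l * p).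
Proof.
move=> c0 c1 L0 p0 h.
have e1 : c * (36 / c * L) = 36 * L by field; rewrite gt_eqF.
have h1 : 36 * L <= c * (l * p ^+ 2) by rewrite -e1 ler_wpM2l // ltW.
have X0 : 0 <= l * p ^+ 2 by apply: le_trans h; rewrite mulr_ge0 // divr_ge0 // ltW.
have h2 : c * (l * p ^+ 2) <= l * p ^+ 2 by rewrite ler_piMl.
have e2 : p / 6 * (c * l * p) = c * (l * p ^+ 2) / 6 by rewrite expr2; ring.
have e3 : p / 6 * (l * p) = (l * p ^+ 2) / 6 by rewrite expr2; ring.
rewrite e2 e3; split; lra.
Qed.

Lemma arith_ii (R : realType) (c p l L : R) : 0 < c -> c <= 1 -> 0 <= L -> 0 < p -> p <= 1 ->
  36 / c * L <= l * p ^+ 2 ->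
  Num.sqrt p <= 7 * Num.sqrt p / 4 - p / 3 /\
  6 * L <= Num.sqrt p * (l * (p * Num.sqrt p)).
Proof.
move=> c0 c1 L0 p0 p1 h.
have q0 : 0 <= Num.sqrt p := sqrtr_ge0 p.
have qq : Num.sqrt p ^+ 2 = p by rewrite sqr_sqrtr // ltW.
have q1 : Num.sqrt p <= 1 by move: qq; rewrite expr2 => qq; nra.
have hpq : p <= Num.sqrt p.
  by rewrite -[X in X <= _]qq expr2 ler_piMr.
split; first lra.
have e1 : c * (36 / c * L) = 36 * L by field; rewrite gt_eqF.
have h1 : 36 * L <= c * (l * p ^+ 2) by rewrite -e1 ler_wpM2l // ltW.
have X0 : 0 <= l * p ^+ 2 by apply: le_trans h; rewrite mulr_ge0 // divr_ge0 // ltW.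
have h2 : c * (l * p ^+ 2) <= l * p ^+ 2 by rewrite ler_piMl.
have e2 : Num.sqrt p * (l * (p * Num.sqrt p)) = l * p ^+ 2.
  transitivity (l * p * Num.sqrt p ^+ 2); first by ring.
  by rewrite qq expr2 mulrA.
rewrite e2; lra.
Qed.

Lemma fin_ar (R : realType) (Y Q X W eps : R) : 1 - Q - X <= Y -> Q <= W -> X <= W ->
  W + W <= eps -> 1 - Y <= eps.
Proof. move=> *; lra. Qed.

Unset Implicit Arguments.
Local Open Scope classical_set_scope.
Local Open Scope ring_scope.

Theorem lemma4p2 (R : realType) (c : R) (p : nat -> R) (l : nat -> nat) :
  0 < c -> c <= 1 ->
  (forall n, 0 < p n <= 1) ->
  (forall n, (l n <= n)%N) ->
  (fun n : nat => ln (n%:R : R) / (Num.sqrt (n%:R : R) * p n)) @ \oo --> (0 : R) ->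
  (fun n : nat => (l n)%:R * p n ^+ 2 / ln (n%:R : R)) @ \oo --> +oo ->
  (fun n : nat =>
     dnp_prob (p n)
       (fun D : digraph n =>
          `[< prop_i c (p n) (l n)%:R D /\ prop_ii (p n) (l n)%:R D >]))
    @ \oo --> (1 : R).
Proof.
move=> c0 c1 hp hl _ /cvgryPge H1.
apply/cvgrPdist_le => eps eps0.
near=> n.
have n2 : (2 < n)%N by near: n; exact: nbhs_infty_gt.
have hM : 36 / c <= (l n)%:R * p n ^+ 2 / ln (n%:R : R) by near: n; exact: H1.
have hN : 2 * expR 1 ^+ 2 / eps < n%:R by near: n; exact: nbhs_infty_gtr.
move: hM hN; set P := p n; set ll := (l n)%:R => hM hN.
have hpn := hp n; rewrite -/P in hpn.
have /andP[p0 p1] := hpn.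
have hp' : 0 <= P <= 1 by rewrite ltW.
set L := ln (n%:R : R).
have L0 : 0 < L by apply: ln_gt0; rewrite ltr1n (ltn_trans _ n2).
rewrite ler_pdivlMr // in hM.
have [i1 i2] := arith_i c0 c1 (ltW L0) p0 hM.
have [ii1 ii2] := arith_ii c0 c1 (ltW L0) p0 p1 hM.
have k1 : P / 6 <= 2 * P / 4 - P / 3 by lra.
have B1 := @G_bound R n P (2 * P) (c * ll * P) (ll * P) (P / 6) hpn n2
  (divr_gt0 p0 (ltr0Sn R 5)) k1 i1 i2.
have B2 := @G_bound R n P (7 * Num.sqrt P) (ll * (P * Num.sqrt P)) (ll * (P * Num.sqrt P))
  (Num.sqrt P) hpn n2 (eq_ind_r is_true p0 (sqrtr_gt0 P)) ii1 ii2 ii2.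
have hE : forall D : digraph n,
    ~~ `[< prop_i c P ll D /\ prop_ii P ll D >] ->
    @Gev R n (2 * P) (c * ll * P) (ll * P) D ||
    @Gev R n (7 * Num.sqrt P) (ll * (P * Num.sqrt P)) (ll * (P * Num.sqrt P)) D.
  move=> D; case: (boolP (Gev _ _ _ D)) => //= g1.
  case: (boolP (Gev _ _ _ D)) => //= g2 hng.
  exfalso; move/negP: hng; apply; apply/asboolP; split.
    move=> A /andP[ha hb]; rewrite leNgt; apply/negP => hlt.
    by move/existsPn: g1 => /(_ A); rewrite ha hlt.
  move=> A /andP[ha hb]; rewrite leNgt; apply/negP => hlt.
  by move/existsPn: g2 => /(_ A); rewrite ha hlt.
have hc := prob_compl (E := fun D : digraph n =>
          `[< prop_i c P ll D /\ prop_ii P ll D >]) hp' hE.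
have hle := prob_le1 (fun D : digraph n =>
          `[< prop_i c P ll D /\ prop_ii P ll D >]) hp'.
set Q := dnp_prob _ _ in hc hle *.
set z := (n%:R^-1 : R) in B1 B2.
have z0 : 0 <= z by rewrite invr_ge0 ler0n.
have z1 : z <= 1 by rewrite invf_le1 ?ltr0n ?ler1n ?(ltn_trans _ n2) // ltnW.
have hz2 : z ^+ 2 <= z by rewrite expr2 ler_piMr.
set C := expR 1 ^+ 2 in hN B1 B2.
have C0 : 0 <= C by rewrite exprn_ge0 // expR_ge0.
have hzC : 2 * C * z <= eps.
  have n0 : 0 < (n%:R : R) by rewrite ltr0n (ltn_trans _ n2).
  rewrite ltr_pdivrMr // in hN.
  rewrite /z ler_pdivrMr //; lra.
have : 2 * C * z ^+ 2 <= 2 * C * z by rewrite ler_wpM2l // mulr_ge0.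
rewrite ger0_norm ?subr_ge0 //.
intro H; have e : z ^+ 2 * C + z ^+ 2 * C = 2 * C * z ^+ 2 by ring.
apply: (fin_ar hc B1 B2); rewrite e; exact: le_trans H hzC.
Unshelve. all: by end_near.
Qed.
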